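(* Let $m,n,w,d$ be positive integers with $w\le m$. For all positive integers $a,m',w'$ such that $am'\le m$ and $aw'\le w\le aw'+m-am'$, we have $A(m,n,w,d)\ge A(m',an,w',d)$. Consequently, $$C\left(\left\lfloor\frac{m}{w}\right\rfloor,nw,d\right)\le A(m,n,w,d)\le B(mn,nw,d).$$
   Context: $J(m,w)$ denotes the set of binary vectors of length $m$ and Hamming weight $w$. Elements of $J(m,w)^n$ are identified with $m\times n$ binary matrices all of whose columns have weight $w$, with binary Hamming distance. $A(m,n,w,d)$ is the maximum cardinality of a nonempty subset of $J(m,w)^n$ with pairwise Hamming distances at least $2d$. $B(N,W,d)$ is the maximum cardinality of a nonempty subset of $J(N,W)$ with pairwise Hamming distances at least $2d$. $C(q,n,d)$ is the maximum cardinality of a nonempty subset of $[q]^n$, $[q]=\{0,\dots,q-1\}$, with pairwise Hamming distances at least $d$. *)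

(* Defs.v *)
From mathcomp Require Import all_boot all_algebra.
Set Implicit Arguments. Unset Strict Implicit. Unset Printing Implicit Defensive.

(* Maximum cardinality of a NONEMPTY subset S of a finite type satisfying P
   (0 if there is none). *)
Definition maxcard (T : finType) (P : {set T} -> bool) : nat :=
  \max_(S : {set T} | (S != set0) && P S) #|S|.

Definition mdist (m n : nat) (X Y : 'M[bool]_(m, n)) : nat :=
  #|[set ij : 'I_m * 'I_n | X ij.1 ij.2 != Y ij.1 ij.2]|.

Definition colweight (m n w : nat) (X : 'M[bool]_(m, n)) : bool :=
  [forall j : 'I_n, #|[set i : 'I_m | X i j]| == w].

Definition A (m n w d : nat) : nat :=
  maxcard (fun S : {set 'M[bool]_(m, n)} =>
    [forall X in S, colweight w X] &&
    [forall X in S, forall Y in S, (X != Y) ==> (2 * d <= mdist X Y)]).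

Definition vdist (N : nat) (x y : {ffun 'I_N -> bool}) : nat :=
  #|[set i : 'I_N | x i != y i]|.

Definition vweight (N : nat) (x : {ffun 'I_N -> bool}) : nat := #|[set i | x i]|.

Definition B (N W d : nat) : nat :=
  maxcard (fun S : {set {ffun 'I_N -> bool}} =>
    [forall x in S, vweight x == W] &&
    [forall x in S, forall y in S, (x != y) ==> (2 * d <= vdist x y)]).

Definition qdist (q n : nat) (x y : {ffun 'I_n -> 'I_q}) : nat :=
  #|[set i : 'I_n | x i != y i]|.

Definition C (q n d : nat) : nat :=
  maxcard (fun S : {set {ffun 'I_n -> 'I_q}} =>
    [forall x in S, forall y in S, (x != y) ==> (d <= qdist x y)]).

(* Main.v *)
Require Import Defs.
From mathcomp Require Import all_boot all_algebra.
Set Implicit Arguments. Unset Strict Implicit. Unset Printing Implicit Defensive.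

Lemma maxcard_le (T U : finType) (P : {set T} -> bool) (Q : {set U} -> bool)
  (f : T -> U) : injective f -> (forall S, P S -> Q (f @: S)) ->
  maxcard P <= maxcard Q.
Proof.
move=> inj PQ; apply/bigmax_leqP => S /andP[nz PS].
rewrite -(card_imset S inj); apply: leq_bigmax_cond.
by rewrite imset_eq0 nz PQ.
Qed.

Lemma card_sumb (T : finType) (P : pred T) :
  #|[set x | P x]| = \sum_x (P x : nat).
Proof.
rewrite -sum1_card big_mkcond /=; apply: eq_bigr => i _.
by rewrite inE; case: (P i).
Qed.

Lemma card_pairs m n (P : 'I_m -> 'I_n -> bool) :
  #|[set ij : 'I_m * 'I_n | P ij.1 ij.2]| = \sum_(j < n) #|[set i | P i j]|.
Proof.
rewrite card_sumb -(pair_big xpredT xpredT (fun i j => (P i j : nat))) /=.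
rewrite exchange_big; apply: eq_bigr => j _; by rewrite card_sumb.
Qed.

Lemma card_pairs_row m n (P : 'I_m -> 'I_n -> bool) :
  #|[set ij : 'I_m * 'I_n | P ij.1 ij.2]| = \sum_(i < m) #|[set j | P i j]|.
Proof.
rewrite card_sumb -(pair_big xpredT xpredT (fun i j => (P i j : nat))) /=.
apply: eq_bigr => j _; by rewrite card_sumb.
Qed.

Definition flat m n (X : 'M[bool]_(m, n)) : {ffun 'I_(m * n) -> bool} :=
  [ffun k => mxvec X ord0 k].

Lemma mxvec_index_inj m n : injective (fun p : 'I_m * 'I_n => mxvec_index p.1 p.2).
Proof.
move=> [i j] [i' j'] /= /(congr1 val) /= H.
by apply: enum_rank_inj; apply: val_inj.
Qed.


Lemma part3 m n w d : A m n w d <= B (m * n) (n * w) d.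
Proof.
apply: (@maxcard_le _ _ _ _ (@flat m n)).
  move=> X Y /ffunP H; apply/matrixP => i j.
  by have := H (mxvec_index i j); rewrite !ffunE !mxvecE.
have key : forall (P : bool -> bool -> bool) (X Y : 'M[bool]_(m, n)),
    #|[set k | P (flat X k) (flat Y k)]| = #|[set ij : 'I_m * 'I_n | P (X ij.1 ij.2) (Y ij.1 ij.2)]|.
  move=> P X Y.
  have -> : [set k | P (flat X k) (flat Y k)] =
    (fun p : 'I_m * 'I_n => mxvec_index p.1 p.2) @: [set ij : 'I_m * 'I_n | P (X ij.1 ij.2) (Y ij.1 ij.2)].
    apply/setP => k; rewrite inE; case/mxvec_indexP: k => i j.
    rewrite (mem_imset _ (i, j) (@mxvec_index_inj m n)) inE /= !ffunE !mxvecE //.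
  by rewrite card_imset //; apply: mxvec_index_inj.
move=> S /andP[/forallP cw /forallP dd]; apply/andP; split.
  apply/forallP => x; apply/implyP => /imsetP[X XS ->].
  rewrite /vweight (key (fun a _ => a) X X) card_pairs.
  have /forallP cX := implyP (cw X) XS.
  rewrite (eq_bigr (fun _ => w)) ?sum_nat_const ?card_ord //.
  by move=> j _; apply/eqP; apply: cX.
apply/forallP => x; apply/implyP => /imsetP[X XS ->].
apply/forallP => y; apply/implyP => /imsetP[Y YS ->].
apply/implyP => nxy.
have nXY : X != Y by apply: contraNneq nxy => ->.
have := implyP (forallP (implyP (dd X) XS) Y) YS; move/implyP/(_ nXY).
by rewrite /vdist (key (fun a b => a != b) X Y).
Qed.
Definition onehot q N (x : {ffun 'I_N -> 'I_q}) : 'M[bool]_(q, N) :=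
  \matrix_(i, j) (x j == i).

Lemma part2 q N d : C q N d <= A q N 1 d.
Proof.
apply: (@maxcard_le _ _ _ _ (@onehot q N)).
  move=> x y H; apply/ffunP => j.
  have := congr1 (fun M : 'M[bool]_(q, N) => M (x j) j) H.
  by rewrite /onehot !mxE eqxx => /esym/eqP.
move=> S /forallP dd; apply/andP; split.
  apply/forallP => X; apply/implyP => /imsetP[x xS ->].
  apply/forallP => j.
  have -> : [set i | onehot x i j] = [set x j].
    by apply/setP => i; rewrite !inE mxE eq_sym.
  by rewrite cards1.
apply/forallP => X; apply/implyP => /imsetP[x xS ->].
apply/forallP => Y; apply/implyP => /imsetP[y yS ->].
apply/implyP => nxy.
have nXY : x != y by apply: contraNneq nxy => ->.
have := implyP (forallP (implyP (dd x) xS) y) yS; move/implyP/(_ nXY).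
suff E : mdist (onehot x) (onehot y) = 2 * qdist x y by rewrite E leq_mul2l => ->; rewrite orbT.
rewrite /mdist (card_pairs (fun i j => onehot x i j != onehot y i j)).
rewrite /qdist (@card_sumb _ (fun j => x j != y j)) big_distrr /=.
apply: eq_bigr => j _.
case: eqP => [E|/eqP E].
  rewrite muln0; apply/eqP; rewrite cards_eq0; apply/eqP/setP => i.
  by rewrite !inE !mxE E eqxx.
have -> : [set i | onehot x i j != onehot y i j] = [set x j; y j].
  apply/setP => i; rewrite !inE !mxE.
  case: (eqVneq i (x j)) => [->|ne]; first by rewrite orTb [y j == x j]eq_sym (negbTE E).
  by rewrite orFb [y j == i]eq_sym; case: (i == y j).
by rewrite cards2 E.
Qed.
Definition tord p (H : 0 < p) (k : nat) : 'I_p := Ordinal (ltn_pmod k H).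



Lemma tord_val p (H : 0 < p) k : k < p -> val (tord H k) = k.
Proof. by move=> lt; rewrite /= modn_small. Qed.

Lemma tord_ord p (H : 0 < p) (r : 'I_p) : tord H r = r.
Proof. by apply: val_inj; rewrite tord_val. Qed.

Lemma block_sum k m' (G : nat -> nat -> nat) : 0 < m' ->
  \sum_(0 <= i < k * m') G (i %% m') (i %/ m') =
  \sum_(0 <= q < k) \sum_(0 <= r < m') G r q.
Proof.
move=> Hm; elim: k => [|k IH]; first by rewrite mul0n !big_geq.
rewrite mulSnr (big_cat_nat _ (leq_addr _ _)) //= IH big_nat_recr //=; congr (_ + _).
rewrite -{1}(add0n (k * m')) big_addn addKn; apply: eq_big_nat => r /andP[_ lt].
by rewrite addnC modnMDl modn_small // divnMDl // divn_small // addn0.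
Qed.

Lemma sum_lt M t : t <= M -> \sum_(0 <= i < M) (i < t : nat) = t.
Proof.
move=> tM; rewrite (@big_cat_nat _ _ _ t) /=;[|by []|by []].
rewrite (eq_big_nat _ _ (F2 := fun _ => 1)); last by move=> i /andP[_ ->].
rewrite sum_nat_const_nat subn0 muln1 big_nat_cond big1 ?addn0 //.
by move=> i /andP[/andP[ti _] _]; rewrite ltnNge ti.
Qed.

Definition emb m n w a m' w' (Hm' : 0 < m') (Han : 0 < a * n)
  (X : 'M[bool]_(m', a * n)) : 'M[bool]_(m, n) :=
  \matrix_(i, j) if i < a * m' then X (tord Hm' i) (tord Han (i %/ m' * n + j))
                 else (i - a * m' < w - a * w').

Definition phi m n a m' (Hm : 0 < m) (Hn : 0 < n) (p : 'I_m' * 'I_(a * n)) : 'I_m * 'I_n :=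
  (tord Hm (p.2 %/ n * m' + p.1), tord Hn p.2).

Lemma phi_lt n a m' (p : 'I_m' * 'I_(a * n)) : 0 < n ->
  p.2 %/ n * m' + p.1 < a * m'.
Proof.
move=> Hn; have : p.2 %/ n < a by rewrite ltn_divLR // ltn_ord.
move=> lt; apply: leq_trans (_ : (p.2 %/ n).+1 * m' <= _).
  by rewrite mulSnr ltn_add2l ltn_ord.
by rewrite leq_mul2r lt orbT.
Qed.

Lemma phi_inj m n a m' (Hm : 0 < m) (Hn : 0 < n) : a * m' <= m ->
  injective (@phi m n a m' Hm Hn).
Proof.
move=> le [r c] [r' c']; rewrite /phi /= => -[E1 E2].
have lt1 := phi_lt (r, c) Hn; have lt1' := phi_lt (r', c') Hn.
rewrite /= !modn_small /= in E1; try exact: leq_trans le.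
have Hm' : 0 < m' by apply: leq_ltn_trans (leq0n r) (ltn_ord r).
have E3 : c %/ n = c' %/ n.
  by move: (congr1 (fun k => k %/ m') E1) => /=; rewrite !divnMDl // !(divn_small (ltn_ord _)) !addn0.
have E4 : val r = val r'.
  by move: (congr1 (fun k => k %% m') E1) => /=; rewrite !modnMDl !(modn_small (ltn_ord _)).
have -> : r = r' by apply: val_inj.
suff -> : c = c' by [].
by apply: val_inj; rewrite /= (divn_eq c n) (divn_eq c' n) E2 E3.
Qed.

Lemma emb_phi m n w a m' w' (Hm' : 0 < m') (Han : 0 < a * n) (Hm : 0 < m) (Hn : 0 < n)
  (X : 'M[bool]_(m', a * n)) p : a * m' <= m ->
  emb m w w' Hm' Han X (phi Hm Hn p).1 (phi Hm Hn p).2 = X p.1 p.2.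
Proof.
move=> le; case: p => r c; have lt := phi_lt (r, c) Hn.
rewrite mxE /= (modn_small (leq_trans lt le)) /= lt.
have -> : tord Hm' (c %/ n * m' + r) = r.
  by apply: val_inj; rewrite /= modnMDl (modn_small (ltn_ord _)).
have -> : tord Han ((c %/ n * m' + r) %/ m' * n + c %% n) = c => //.
apply: val_inj; rewrite /= divnMDl // (divn_small (ltn_ord _)) addn0 -divn_eq.
by rewrite modn_small.
Qed.

Lemma phi_surj m n a m' (Hm' : 0 < m') (Han : 0 < a * n) (Hm : 0 < m) (Hn : 0 < n)
  (i : 'I_m) (j : 'I_n) : i < a * m' ->
  (i, j) = phi Hm Hn (tord Hm' i, tord Han (i %/ m' * n + j)).
Proof.
move=> lt.
have lt2 : i %/ m' * n + j < a * n.
  apply: leq_trans (_ : (i %/ m').+1 * n <= _).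
    by rewrite mulSnr ltn_add2l ltn_ord.
  by rewrite leq_mul2r ltn_divLR // lt orbT.
rewrite /phi /=; congr (_, _); apply: val_inj => /=.
  rewrite (modn_small lt2) mulnC divnMDl // (divn_small (ltn_ord _)) addn0.
  by rewrite mulnC -divn_eq modn_small.
by rewrite (modn_small lt2) modnMDl modn_small.
Qed.

Lemma emb_col m n w a m' w' (Hm' : 0 < m') (Han : 0 < a * n)
  (X : 'M[bool]_(m', a * n)) : a * m' <= m -> a * w' <= w -> w <= a * w' + (m - a * m') ->
  colweight w' X -> colweight w (emb m w w' Hm' Han X).
Proof.
move=> le1 le2 le3 /forallP cX; apply/forallP => j; apply/eqP.
rewrite card_sumb.
pose F := fun k : nat => ((if k < a * m' then
   X (tord Hm' k) (tord Han (k %/ m' * n + j)) else (k - a * m' < w - a * w')) : nat).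
rewrite (eq_bigr (fun i : 'I_m => F i)); last by move=> i _; rewrite mxE.
rewrite -(big_mkord xpredT F) (@big_cat_nat _ _ _ (a * m')) //=.
rewrite (eq_big_nat _ _ (F2 := fun k => (fun r q => X (tord Hm' r) (tord Han (q * n + j)) : nat) (k %% m') (k %/ m')));
  last by move=> k /andP[_ lt]; rewrite /F lt; congr (nat_of_bool (X _ _)); apply: val_inj; rewrite /= modn_mod.
rewrite (@block_sum a m' (fun r q => X (tord Hm' r) (tord Han (q * n + j)) : nat)) //.
rewrite (eq_big_nat _ _ (F2 := fun _ => w')); last first.
  move=> q /andP[_ qa].
  rewrite big_mkord (eq_bigr (fun r : 'I_m' => (X r (tord Han (q * n + j)) : nat))); last first.
    by move=> r _; rewrite tord_ord.
  by rewrite -card_sumb; apply/eqP; apply: cX.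
rewrite sum_nat_const_nat subn0.
rewrite -{1}(add0n (a * m')) big_addn.
rewrite (eq_big_nat _ _ (F2 := fun i => (i < w - a * w') : nat)); last first.
  by move=> i _; rewrite /F ltnNge leq_addl /= addnK.
rewrite sum_lt; first by rewrite subnKC.
by rewrite leq_subLR.
Qed.

Lemma part1 m n w d a m' w' : 0 < m -> 0 < n -> 0 < a -> 0 < m' ->
  a * m' <= m -> a * w' <= w -> w <= a * w' + (m - a * m') ->
  A m' (a * n) w' d <= A m n w d.
Proof.
move=> Hm Hn Ha Hm' le1 le2 le3.
have Han : 0 < a * n by rewrite muln_gt0 Ha.
have key : forall X : 'M[bool]_(m', a * n), forall p,
  emb m w w' Hm' Han X (phi Hm Hn p).1 (phi Hm Hn p).2 = X p.1 p.2.
  by move=> X p; apply: emb_phi.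
apply: (@maxcard_le _ _ _ _ (emb m w w' Hm' Han)).
  move=> X Y E; apply/matrixP => r c.
  by rewrite -(key X (r, c)) -(key Y (r, c)) E.
move=> S /andP[/forallP cw /forallP dd]; apply/andP; split.
  apply/forallP => x; apply/implyP => /imsetP[X XS ->].
  by apply: emb_col => //; apply: (implyP (cw X)).
apply/forallP => x; apply/implyP => /imsetP[X XS ->].
apply/forallP => y; apply/implyP => /imsetP[Y YS ->].
apply/implyP => nxy.
have nXY : X != Y by apply: contraNneq nxy => ->.
have := implyP (forallP (implyP (dd X) XS) Y) YS; move/implyP/(_ nXY).
suff -> : mdist (emb m w w' Hm' Han X) (emb m w w' Hm' Han Y) = mdist X Y by [].
rewrite /mdist.
have -> : [set ij : 'I_m * 'I_n | emb m w w' Hm' Han X ij.1 ij.2 != emb m w w' Hm' Han Y ij.1 ij.2]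
  = phi Hm Hn @: [set rc : 'I_m' * 'I_(a * n) | X rc.1 rc.2 != Y rc.1 rc.2].
  apply/setP => [[i j]]; rewrite inE /=.
  case: (ltnP i (a * m')) => [lt|ge].
    rewrite (phi_surj Hm' Han Hm Hn j lt) (mem_imset _ _ (@phi_inj m n a m' Hm Hn le1)) inE.
    by rewrite -(key X) -(key Y) -(phi_surj Hm' Han Hm Hn j lt).
  have -> : emb m w w' Hm' Han X i j = emb m w w' Hm' Han Y i j.
    by rewrite !mxE ltnNge ge.
  rewrite eqxx; apply/esym/negbTE; apply/imsetP => -[p _ E].
  have E1 : val i = p.2 %/ n * m' + p.1.
    by move: E => [-> _] /=; rewrite modn_small //; apply: leq_trans (phi_lt p Hn) le1.
  by move: ge; rewrite E1 leqNgt phi_lt.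
by rewrite card_imset //; apply: phi_inj.
Qed.

Theorem proposition6 (m n w d : nat) :
  0 < m -> 0 < n -> 0 < w -> 0 < d -> w <= m ->
  (forall a m' w' : nat, 0 < a -> 0 < m' -> 0 < w' ->
     a * m' <= m -> a * w' <= w -> w <= a * w' + (m - a * m') ->
     A m' (a * n) w' d <= A m n w d)
  /\ C (m %/ w) (n * w) d <= A m n w d
  /\ A m n w d <= B (m * n) (n * w) d.
Proof.
move=> Hm Hn Hw Hd wm.
have P1 : forall a m' w' : nat, 0 < a -> 0 < m' -> 0 < w' ->
     a * m' <= m -> a * w' <= w -> w <= a * w' + (m - a * m') ->
     A m' (a * n) w' d <= A m n w d.
  by move=> a m' w' Ha Hm' _; apply: part1.
split; first exact: P1.
split; last exact: part3.
apply: leq_trans (part2 _ _ _) _.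
rewrite mulnC; apply: P1 => //.
- by rewrite divn_gt0.
- by rewrite mulnC leq_trunc_div.
- by rewrite muln1.
- by rewrite muln1 leq_addr.
Qed.
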